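(* Let $Q(y)$ and $R(y)$ be probability distributions on the set of one-hot vectors $\{0,1\}^k\cap\Delta^{k-1}$. Let $\mathcal{P}_c[Q]$ denote the set of probability distributions $P(c)$ on $\Delta^{k-1}$ such that, for $c\sim P$, the one-hot vector $e_{\arg\max_j c_j}$ has distribution $Q$. Then $$\inf_{P(c)\in\mathcal{P}_c[Q]}W_\infty\bigl(P(c),R(y)\bigr)=0.5\,W_\infty\bigl(Q(y),R(y)\bigr).$$
   Context: $\Delta^{k-1}=\{c\in\mathbb{R}^k: c_j\ge 0,\ \sum_j c_j=1\}$; $e_i$ is the $i$-th standard basis vector. For probability distributions $P,Q$ on $\mathbb{R}^k$, $W_\infty(P,Q)=\inf_{\pi\in\Pi(P,Q)}\int\|u-v\|_\infty\,d\pi(u,v)$ over couplings $\pi$ of $P$ and $Q$ (optimal transport distance with ground cost $\|u-v\|_\infty$). Ties in $\arg\max$ are broken by a fixed rule (e.g. smallest index). (In the paper, $Q$ is the pseudo-label distribution $P_{\mathrm{pseudo}}(y)$ and $R$ is the target label distribution $P_T(y)$.) *)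

(* Defs.v *)
From HB Require Import structures.
From mathcomp Require Import all_boot all_order all_algebra.
From mathcomp Require Import all_classical all_reals all_analysis.
Set Implicit Arguments. Unset Strict Implicit. Unset Printing Implicit Defensive.
Import Order.TTheory GRing.Theory Num.Theory.
Import numFieldNormedType.Exports.
Local Open Scope classical_set_scope.
Local Open Scope ring_scope.

Definition vecR (R : realType) (k : nat) :=
  g_sigma_algebraType (@open 'rV[R]_k).
HB.instance Definition _ (R : realType) (k : nat) :=
  Measurable.on (vecR R k).

Definition simplex (R : realType) (k : nat) : set (vecR R k) :=
  [set c | (forall j, 0 <= c ord0 j) /\ \sum_j c ord0 j = 1].

Definition e_ (R : realType) (k : nat) (i : 'I_k) : vecR R k :=
  \row_j (i == j)%:R.

Definition onehots (R : realType) (k : nat) : set (vecR R k) :=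
  [set c | exists i, c = @e_ R k i].

(* i is the arg max of c, ties broken by the smallest index *)
Definition is_argmax (R : realType) (k : nat) (c : vecR R k) (i : 'I_k) : bool :=
  [forall j : 'I_k, c ord0 j <= c ord0 i] && [forall j : 'I_k, (j < i)%N ==> (c ord0 j < c ord0 i)].

Definition onehot_argmax (R : realType) (k : nat) (c : vecR R k) : vecR R k :=
  \row_j (is_argmax c j)%:R.

Definition coupling (R : realType) (k : nat)
    (P Q : probability (vecR R k) R) : set (probability (vecR R k * vecR R k)%type R) :=
  [set pi : probability (vecR R k * vecR R k)%type R | forall A : set (vecR R k), measurable A ->
      pi (A `*` setT) = P A /\ pi (setT `*` A) = Q A].

(* W_infty(P,Q) = inf over couplings pi of \int ||u - v||_infty dpi(u,v);
   `|_| on row vectors is the max norm (mx_norm). *)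
Definition W_inf (R : realType) (k : nat) (P Q : probability (vecR R k) R) : \bar R :=
  ereal_inf [set (\int[pi]_z (`| z.1 - z.2 | : R)%:E)%E | pi in coupling P Q].

Definition Pc (R : realType) (k : nat) (Q : probability (vecR R k) R) :
    set (probability (vecR R k) R) :=
  [set P : probability (vecR R k) R | P (@simplex R k) = 1%E /\
     forall A : set (vecR R k), measurable A ->
       P (@onehot_argmax R k @^-1` A) = Q A].

(* Main.v *)
Require Import Defs.
From HB Require Import structures.
From mathcomp Require Import all_boot all_order all_algebra.
From mathcomp Require Import all_classical all_reals all_analysis.
From mathcomp Require Import measurable_realfun.
From mathcomp Require Import ring lra.
Import Order.TTheory GRing.Theory Num.Theory.
Import numFieldNormedType.Exports.
Local Open Scope classical_set_scope.
Local Open Scope ring_scope.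

Lemma entry_continuous (R : realType) m n (i : 'I_m) (j : 'I_n) :
  continuous (fun c : 'M[R]_(m, n) => c i j).
Proof.
move=> c B /= hB.
exists (fun i' j' => if (i' == i) && (j' == j) then B else setT).
  by move=> i' j'; case: ifP => [/andP[/eqP -> /eqP ->]|_]; [exact: hB| exact: filterT].
by move=> M /(_ i j); rewrite !eqxx.
Qed.

Lemma coord_measurable (R : realType) k (i : 'I_1) (j : 'I_k) :
  measurable_fun setT (fun c : vecR R k => c i j).
Proof.
apply: (@measurability _ _ _ _ _ _ (RGenOpens.G (R:=R))).
  exact: RGenOpens.measurableE.
move=> _ [_ [a [b ->] <-]]; apply: sub_sigma_algebra.
rewrite setTI.
have := @entry_continuous R 1 k i j.
by move/continuousP => /(_ _ (@interval_open R (BRight a) (BLeft b) isT isT)).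
Qed.

Lemma meas_pre d (T : measurableType d) (R : realType) (f : T -> R) (Y : set R) :
  measurable_fun setT f -> measurable Y -> measurable (f @^-1` Y).
Proof. by move=> mf mY; rewrite -[X in measurable X]setTI; exact: mf. Qed.

Lemma fin_preimage d (T : measurableType d) (U : Type) (F : finType)
  (phi : T -> F) (G : F -> U) (Y : set U) :
  (forall a, measurable (phi @^-1` [set a])) -> measurable ((G \o phi) @^-1` Y).
Proof.
move=> mphi.
have -> : (G \o phi) @^-1` Y = \bigcup_(a in G @^-1` Y) (phi @^-1` [set a]).
  apply/seteqP; split => [x /= Yx | x [a /= Ya ->] //].
  by exists (phi x).
apply: fin_bigcup_measurable; first exact: finite_finset.
by move=> a _; exact: mphi.
Qed.

Lemma fin_mfun d d' (T : measurableType d) (U : measurableType d') (F : finType)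
  (phi : T -> F) (G : F -> U) :
  (forall a, measurable (phi @^-1` [set a])) -> measurable_fun setT (G \o phi).
Proof.
by move=> mphi _ Y _; rewrite setTI; exact: fin_preimage.
Qed.

Lemma meas_forall d (T : measurableType d) (F : finType) (P : T -> F -> bool) :
  (forall j, measurable [set c | P c j]) -> measurable [set c | [forall j, P c j]].
Proof.
move=> mP.
have -> : [set c | [forall j, P c j]] = \bigcap_(j in setT) [set c | P c j].
  apply/seteqP; split => [x /= /forallP H j _ | x /= H]; first exact: H.
  by apply/forallP => j; exact: H.
apply: fin_bigcap_measurable; first exact: finite_finset.
by move=> j _; exact: mP.
Qed.

Lemma meas_andb d (T : measurableType d) (P1 P2 : T -> bool) :
  measurable [set c | P1 c] -> measurable [set c | P2 c] ->
  measurable [set c | P1 c && P2 c].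
Proof.
move=> m1 m2.
have -> : [set c | P1 c && P2 c] = [set c | P1 c] `&` [set c | P2 c].
  by apply/seteqP; split => x /=; [move/andP | move=> [-> ->]].
exact: measurableI.
Qed.

Lemma meas_eqb d (T : measurableType d) (P : T -> bool) (b : bool) :
  measurable [set c | P c] -> measurable [set c | P c == b].
Proof.
move=> m; case: b.
  by have -> : [set c | P c == true] = [set c | P c]
    by apply/seteqP; split => x /=; rewrite eqb_id.
have -> : [set c | P c == false] = ~` [set c | P c].
  by apply/seteqP; split => x /=; rewrite eqbF_neg => /negP.
exact: measurableC.
Qed.

Lemma meas_implyb d (T : measurableType d) (P : T -> bool) (b : bool) :
  measurable [set c | P c] -> measurable [set c | b ==> P c].
Proof.
move=> m; case: b => //=.
by have -> : [set c : T | true] = setT by apply/seteqP; split.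
Qed.

Lemma meas_le (R : realType) k (i j : 'I_k) :
  measurable [set c : vecR R k | c ord0 j <= c ord0 i].
Proof.
have -> : [set c : vecR R k | c ord0 j <= c ord0 i] =
    (fun c : vecR R k => c ord0 i - c ord0 j) @^-1` [set` `[0, +oo[%R].
  by apply/seteqP; split => x /=; rewrite in_itv /= andbT subr_ge0.
apply: meas_pre; last exact: measurable_itv.
by apply: measurable_funB; exact: coord_measurable.
Qed.

Lemma meas_lt (R : realType) k (i j : 'I_k) :
  measurable [set c : vecR R k | c ord0 j < c ord0 i].
Proof.
have -> : [set c : vecR R k | c ord0 j < c ord0 i] =
    (fun c : vecR R k => c ord0 i - c ord0 j) @^-1` [set` `]0, +oo[%R].
  by apply/seteqP; split => x /=; rewrite in_itv /= andbT subr_gt0.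
apply: meas_pre; last exact: measurable_itv.
by apply: measurable_funB; exact: coord_measurable.
Qed.

Lemma meas_argmax (R : realType) k (i : 'I_k) :
  measurable [set c : vecR R k | is_argmax c i].
Proof.
apply: meas_andb; apply: meas_forall => j.
  exact: meas_le.
by apply: meas_implyb; exact: meas_lt.
Qed.

Lemma oh_comp (R : realType) k : @onehot_argmax R k =
  (fun b : {ffun 'I_k -> bool} => \row_j (b j)%:R : vecR R k) \o
  (fun c : vecR R k => [ffun j => is_argmax c j]).
Proof. by apply/funext => c /=; apply/matrixP => a b; rewrite !mxE ffunE. Qed.

Lemma oh_pre (R : realType) k (A : set (vecR R k)) :
  measurable (@onehot_argmax R k @^-1` A).
Proof.
rewrite oh_comp; apply: fin_preimage => b.
have -> : (fun c : vecR R k => [ffun j => is_argmax c j]) @^-1` [set b] =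
    [set c | [forall j, is_argmax c j == b j]].
  apply/seteqP; split => x /=.
    by move=> <-; apply/forallP => j; rewrite ffunE.
  by move/forallP => H; apply/ffunP => j; rewrite ffunE; exact/eqP/H.
by apply: meas_forall => j; apply: meas_eqb; exact: meas_argmax.
Qed.

Lemma oh_meas (R : realType) k : measurable_fun setT (@onehot_argmax R k).
Proof. by move=> _ Y _; rewrite setTI; exact: oh_pre. Qed.

Lemma h_meas (R : realType) k :
  measurable_fun setT (fun z : vecR R k * vecR R k => `|z.1 - z.2|).
Proof.
have -> : (fun z : vecR R k * vecR R k => `|z.1 - z.2|) =
  (fun z => \big[Num.max/0]_(ij <- index_enum ('I_1 * 'I_k)%type)
      `|z.1 ij.1 ij.2 - z.2 ij.1 ij.2|).
  apply/funext => z; rewrite [LHS]mx_normrE; apply: eq_bigr => ij _.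
  by rewrite !mxE.
elim: (index_enum _) => [|a s IH].
  under eq_fun do rewrite big_nil; exact: measurable_cst.
under eq_fun do rewrite big_cons.
apply: measurable_maxr => //.
have mB : measurable_fun setT (fun z : vecR R k * vecR R k => z.1 a.1 a.2 - z.2 a.1 a.2).
  apply: measurable_funB.
    exact: (measurableT_comp (coord_measurable R k a.1 a.2) measurable_fst).
  exact: (measurableT_comp (coord_measurable R k a.1 a.2) measurable_snd).
exact: (measurableT_comp (@normr_measurable R setT) mB).
Qed.

Definition idx (R : realType) k (u : vecR R k) : option 'I_k := [pick i | u == @e_ R k i].
Definition E_ (R : realType) k (a : option 'I_k) : vecR R k :=
  if a is Some i then @e_ R k i else 0.
Arguments idx {R k}.
Arguments E_ {R k}.

Lemma e_inj (R : realType) k (i j : 'I_k) : @e_ R k i = @e_ R k j -> i = j.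
Proof.
move=> H; have := congr1 (fun M : vecR R k => M ord0 j) H; rewrite !mxE eqxx.
case: (i =P j) => // _ /=; move/eqP; rewrite eq_sym oner_eq0.
by [].
Qed.

Lemma idx_e (R : realType) k (i : 'I_k) : idx (@e_ R k i) = Some i.
Proof.
rewrite /idx; case: pickP => [i' /eqP/e_inj -> // | /(_ i)]; by rewrite eqxx.
Qed.

Lemma idx_Some (R : realType) k (u : vecR R k) i : idx u = Some i -> u = @e_ R k i.
Proof. by rewrite /idx; case: pickP => [i' /eqP -> [<-] | _]. Qed.

Lemma idx_None (R : realType) k (u : vecR R k) : idx u = None -> ~ onehots u.
Proof. by move=> H [i ui]; move: H; rewrite ui idx_e. Qed.

Lemma E_idx (R : realType) k (u : vecR R k) : onehots u -> E_ (idx u) = u.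
Proof. by move=> [i ->]; rewrite idx_e. Qed.

Lemma singleton_meas (R : realType) k (v : vecR R k) : measurable [set v].
Proof.
have -> : [set v] = \bigcap_(j in setT) ((fun c : vecR R k => c ord0 j) @^-1` [set v ord0 j]).
  apply/seteqP; split => [x /= -> j _ // | x /= H].
  by apply/matrixP => a b; rewrite (ord1 a); exact: H.
apply: fin_bigcap_measurable; first exact: finite_finset.
move=> j _; apply: meas_pre; last exact: measurable_set1.
exact: coord_measurable.
Qed.

Lemma onehots_meas (R : realType) k : measurable (@onehots R k).
Proof.
have -> : @onehots R k = \bigcup_(i in setT) [set @e_ R k i].
  apply/seteqP; split => [x [i ->] | x [i _ ->]]; [by exists i | by exists i].
apply: fin_bigcup_measurable; first exact: finite_finset.
by move=> i _; exact: singleton_meas.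
Qed.

Lemma idx_fiber (R : realType) k (a : option 'I_k) :
  measurable ((@idx R k) @^-1` [set a]).
Proof.
case: a => [i|].
  have -> : (@idx R k) @^-1` [set Some i] = [set @e_ R k i].
    apply/seteqP; split => x /=; first exact: idx_Some.
    by move=> ->; rewrite idx_e.
  exact: singleton_meas.
have -> : (@idx R k) @^-1` [set None] = ~` (@onehots R k).
  apply/seteqP; split => x /=; first exact: idx_None.
  by case E: (idx x) => [i|] // H; exfalso; apply: H; exists i; exact: idx_Some.
by apply: measurableC; exact: onehots_meas.
Qed.

Lemma idx2_fiber (R : realType) k (ab : option 'I_k * option 'I_k) :
  measurable ((fun z : vecR R k * vecR R k => (idx z.1, idx z.2)) @^-1` [set ab]).
Proof.
have -> : (fun z : vecR R k * vecR R k => (idx z.1, idx z.2)) @^-1` [set ab] =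
   ((@idx R k) @^-1` [set ab.1]) `*` ((@idx R k) @^-1` [set ab.2]).
  apply/seteqP; split => [[x y] /= <- // | [x y] /= [-> ->]]; by case: ab.
by apply: measurableX; exact: idx_fiber.
Qed.

Definition gmap (R : realType) k (l : R) (z : vecR R k * vecR R k) : vecR R k :=
  l *: E_ (idx z.1) + (1 - l) *: E_ (idx z.2).
Arguments gmap {R k}.

Lemma gmap_pre (R : realType) k (l : R) (Y : set (vecR R k)) :
  measurable (gmap l @^-1` Y).
Proof.
exact: (@fin_preimage _ _ _ _ (fun z : vecR R k * vecR R k => (idx z.1, idx z.2))
   (fun ab => l *: E_ ab.1 + (1 - l) *: E_ ab.2) Y (@idx2_fiber R k)).
Qed.

Lemma gmap_meas (R : realType) k (l : R) : measurable_fun setT (@gmap R k l).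
Proof. by move=> _ Y _; rewrite setTI; exact: gmap_pre. Qed.

Lemma mxn_entry (R : realType) m n (x : 'M[R]_(m, n)) i j : `|x i j| <= `|x|.
Proof.
rewrite [X in _ <= X]mx_normrE.
exact: (le_bigmax _ (fun ij : 'I_m * 'I_n => `|x ij.1 ij.2|) (i, j)).
Qed.

Arguments mxn_entry {R m n}.

Lemma mxn_le (R : realType) m n (x : 'M[R]_(m, n)) (a : R) :
  0 <= a -> (forall i j, `|x i j| <= a) -> `|x| <= a.
Proof.
move=> a0 H; rewrite [X in X <= _]mx_normrE; apply: bigmax_le => // ij _.
Qed.

Lemma argmax_bound (R : realType) k (c : vecR R k) (j : 'I_k) :
  `|onehot_argmax c - @e_ R k j| <= 2 * `|c - @e_ R k j|.
Proof.
set m := `|c - @e_ R k j|.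
have m0 : 0 <= m by exact: normr_ge0.
have hm l : - m <= c ord0 l - (j == l)%:R <= m.
  by rewrite -ler_norml; have := mxn_entry (c - @e_ R k j) ord0 l; rewrite !mxE.
have key l : l != j -> c ord0 j <= c ord0 l -> 1 <= 2 * m.
  move=> lj cjl; have := hm l; have := hm j.
  rewrite eqxx eq_sym (negbTE lj) /= ?mulr1n ?mulr0n => /andP[h1 h2] /andP[h3 h4].
  lra.
apply: mxn_le; first by rewrite mulr_ge0.
move=> a l; rewrite (ord1 a) !mxE.
case: (boolP (l == j)) => [/eqP -> | lj].
  rewrite eqxx; case: (boolP (is_argmax c j)) => hj.
    by rewrite subrr normr0 mulr_ge0.
  rewrite /= ?mulr1n ?mulr0n sub0r normrN normr1.
  move: hj; rewrite /is_argmax negb_and => /orP[/forallPn [l' H] | /forallPn [l' H]].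
    rewrite -ltNge in H; apply: (key l') => //; last exact: ltW.
    by apply/eqP => E; rewrite E ltxx in H.
  rewrite negb_imply -leNgt in H; case/andP: H => H1 H2.
  by apply: (key l') => //; rewrite neq_ltn H1.
rewrite eq_sym (negbTE lj) /= ?mulr0n subr0.
case: (boolP (is_argmax c l)) => hl; last by rewrite /= ?mulr0n normr0 mulr_ge0.
rewrite /= ?mulr1n normr1; apply: (key l) => //.
by case/andP: hl => /forallP /(_ j).
Qed.

Lemma argmax_mix (R : realType) k (l : R) (i j : 'I_k) : 2^-1 < l -> l <= 1 ->
  onehot_argmax (l *: @e_ R k i + (1 - l) *: @e_ R k j) = @e_ R k i.
Proof.
move=> l1 l2.
set c := l *: @e_ R k i + (1 - l) *: @e_ R k j.
have ce l' : c ord0 l' = l * (i == l')%:R + (1 - l) * (j == l')%:R by rewrite !mxE.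
have hlt l' : l' != i -> c ord0 l' < c ord0 i.
  move=> h; rewrite !ce eqxx eq_sym (negbTE h).
  case: (j == l'); case: (j == i); rewrite /= ?mulr1n ?mulr0n; lra.
apply/matrixP => a b; rewrite (ord1 a) !mxE.
have -> : is_argmax c b = (i == b).
  case: (boolP (i == b)) => [/eqP <- | ib].
    apply/andP; split; apply/forallP => l'.
      by case: (boolP (l' == i)) => [/eqP -> // | h]; exact/ltW/hlt.
    apply/implyP => h; apply: hlt; by rewrite neq_ltn h.
  apply/negbTE; rewrite /is_argmax negb_and; apply/orP; left.
  apply/forallPn; exists i; rewrite -ltNge; apply: hlt; by rewrite eq_sym.
by [].
Qed.

Lemma mix_dist (R : realType) k (l : R) (u v : vecR R k) : 0 <= l ->
  `|(l *: u + (1 - l) *: v) - v| = l * `|u - v|.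
Proof.
move=> l0.
have -> : (l *: u + (1 - l) *: v) - v = l *: (u - v).
  by apply/matrixP => a b; rewrite !mxE; ring.
by rewrite mx_normZ ger0_norm.
Qed.

Lemma sum_e (R : realType) k (i : 'I_k) : \sum_j (@e_ R k i) ord0 j = 1.
Proof.
under eq_bigr do rewrite mxE.
rewrite (bigD1 i) //= eqxx big1 ?addr0 // => l /negbTE.
by rewrite eq_sym => ->.
Qed.

Lemma mix_simplex (R : realType) k (l : R) (u v : vecR R k) : 0 <= l <= 1 ->
  onehots u -> onehots v -> simplex (l *: u + (1 - l) *: v).
Proof.
move=> /andP[l0 l1] [i ->] [j ->]; split.
  move=> a; rewrite !mxE; case: (i == a); case: (j == a); rewrite /= ?mulr1n ?mulr0n; lra.
under eq_bigr do rewrite !mxE.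
rewrite big_split /= -!mulr_sumr.
have se : forall i0 : 'I_k, \sum_(j0 < k) (i0 == j0)%:R = 1 :> R.
  by move=> i0; rewrite -[RHS](sum_e R k i0); apply: eq_bigr => x _; rewrite mxE.
rewrite !se; lra.
Qed.

Definition mkmf d d' (T : measurableType d) (U : measurableType d') (f : T -> U)
  (mf : measurable_fun setT f) : {mfun T >-> U} :=
  HB.pack f (isMeasurableFun.Build _ _ _ _ _ mf).
Arguments mkmf {d d' T U f}.

Lemma mkmfE d d' (T : measurableType d) (U : measurableType d') (f : T -> U)
  (mf : measurable_fun setT f) x : mkmf mf x = f x.
Proof. by []. Qed.

Lemma cpl_negl (R : realType) k (P1 P2 : probability (vecR R k) R)
  (pi : probability (vecR R k * vecR R k)%type R) (A B : set (vecR R k)) :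
  measurable A -> measurable B -> coupling P1 P2 pi ->
  P1 A = 1%E -> P2 B = 1%E -> pi.-negligible (~` (A `*` B)).
Proof.
move=> mA mB cp PA PB.
have n1 : pi.-negligible (~` A `*` setT).
  exists (~` A `*` setT); split => //.
    by apply: measurableX => //; exact: measurableC.
  by rewrite (cp _ (measurableC mA)).1 probability_setC // PA subee.
have n2 : pi.-negligible (setT `*` ~` B).
  exists (setT `*` ~` B); split => //.
    by apply: measurableX => //; exact: measurableC.
  by rewrite (cp _ (measurableC mB)).2 probability_setC // PB subee.
apply: negligibleS (negligibleU n1 n2).
move=> [x y] /= H; case: (pselect (A x)) => [Ax|nAx]; last by left; split.
by right; split => // By; apply: H.
Qed.

Lemma negl_eq d (T : measurableType d) (R : realType) (pi : {measure set T -> \bar R})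
  (N X Y : set T) : pi.-negligible N -> measurable X -> measurable Y ->
  (forall z, ~ N z -> (X z <-> Y z)) -> pi X = pi Y.
Proof.
move=> [M [mM M0 NM]] mX mY H.
have E Z : measurable Z -> pi Z = pi (Z `\` M).
  move=> mZ.
  have I0 : pi (Z `&` M) = 0%E.
    apply/eqP; rewrite eq_le measure_ge0 andbT -M0; apply: le_measure.
    - by rewrite inE; exact: measurableI.
    - by rewrite inE.
    - exact: subIsetr.
  have := measureDI pi mZ mM; move=> ->.
  change (pi (Z `\` M) + pi (Z `&` M) = pi (Z `\` M))%E.
  by rewrite I0 adde0.
rewrite (E _ mX) (E _ mY); congr (pi _); apply/seteqP; split => z [Xz nMz];
  (split => //; apply/(H z) => // Nz; apply: nMz; exact: NM).
Qed.

Lemma hE_meas (R : realType) k :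
  measurable_fun setT (fun z : vecR R k * vecR R k => (`|z.1 - z.2|)%:E).
Proof. by apply/measurable_EFinP; exact: h_meas. Qed.

Lemma lower_bound (R : realType) k (Q Rt P : probability (vecR R k) R)
  (pi : probability (vecR R k * vecR R k)%type R) :
  Rt (@onehots R k) = 1%E -> Pc Q P -> coupling P Rt pi ->
  ((2^-1)%:E * W_inf Q Rt <= \int[pi]_z (`|z.1 - z.2| : R)%:E)%E.
Proof.
move=> RtO [_ PQ] cp.
pose Psi (z : vecR R k * vecR R k) := (onehot_argmax z.1, z.2).
have mPsi : measurable_fun setT Psi.
  exact: measurable_fun_pair (measurableT_comp (@oh_meas R k) measurable_fst) measurable_snd.
pose pi' : probability (vecR R k * vecR R k)%type R := distribution pi (mkmf mPsi).
have cp' : coupling Q Rt pi'.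
  move=> A mA; split.
    change (pi (Psi @^-1` (A `*` setT)) = Q A).
    have -> : Psi @^-1` (A `*` setT) = (@onehot_argmax R k @^-1` A) `*` setT.
      by apply/seteqP; split => -[x y].
    by rewrite (cp _ (oh_pre R k A)).1 PQ.
  change (pi (Psi @^-1` (setT `*` A)) = Rt A).
  have -> : Psi @^-1` (setT `*` A) = setT `*` A.
    by apply/seteqP; split => -[x y].
  by rewrite (cp _ mA).2.
apply: (@le_trans _ _ ((2^-1)%:E * \int[pi']_z (`|z.1 - z.2| : R)%:E))%E.
  apply: lee_wpmul2l; first by rewrite lee_fin invr_ge0.
  rewrite /W_inf. apply: ereal_inf_lbound. by exists pi'.
rewrite /pi' ge0_integral_pushforward //; last first.
  by apply/measurable_EFinP; exact: h_meas.
rewrite preimage_setT -ge0_integralZl_EFin //; last 2 first.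
  - by move=> z _; rewrite lee_fin.
  - by apply/measurable_EFinP; exact: (measurableT_comp (h_meas R k) mPsi).
apply: ae_ge0_le_integral => //.
- by move=> z _; apply: mule_ge0; rewrite lee_fin //; lra.
- apply: measurable_funeM; by apply/measurable_EFinP; exact: (measurableT_comp (h_meas R k) mPsi).
- by apply/measurable_EFinP; exact: h_meas.
have N := @cpl_negl R k _ _ _ _ _ measurableT (@onehots_meas R k) cp (probability_setT P) RtO.
apply: negligibleS N => -[x y] /= nP [_ [j yj]]; apply: nP => _.
rewrite yj -EFinM lee_fin.
have := argmax_bound R k x j; lra.
Qed.

Arguments negl_eq {d T R pi N X Y}.

Lemma upper_bound (R : realType) k (Q Rt : probability (vecR R k) R)
  (pi' : probability (vecR R k * vecR R k)%type R) (l : R) :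
  Q (@onehots R k) = 1%E -> Rt (@onehots R k) = 1%E -> coupling Q Rt pi' ->
  2^-1 < l -> l <= 1 ->
  (ereal_inf [set W_inf P Rt | P in Pc Q] <=
     l%:E * \int[pi']_z (`|z.1 - z.2| : R)%:E)%E.
Proof.
move=> QO RtO cp l1 l2.
have l0 : 0 <= l by lra.
have mg := gmap_meas R k l.
pose Phi (z : vecR R k * vecR R k) := (gmap l z, z.2).
have mPhi : measurable_fun setT Phi := measurable_fun_pair mg measurable_snd.
pose P : probability (vecR R k) R := distribution pi' (mkmf mg).
pose pi : probability (vecR R k * vecR R k)%type R := distribution pi' (mkmf mPhi).
have N := @cpl_negl R k _ _ _ _ _ (onehots_meas R k) (onehots_meas R k) cp QO RtO.
have gOO z : ~ (~` (@onehots R k `*` @onehots R k)) z ->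
    exists i j, z = (@e_ R k i, @e_ R k j).
  case: z => x y /= H.
  have [[i xi] [j yj]] : onehots x /\ onehots y.
    by apply: contrapT => H'; apply: H => H''; apply: H'.
  by exists i, j; rewrite xi yj.
have PPc : Pc Q P.
  split.
    change (pi' (gmap l @^-1` @simplex R k) = 1%E).
    rewrite -(probability_setT pi').
    apply: (negl_eq N) => //; first exact: gmap_pre.
    move=> z /gOO [i [j ->]]; split => // _.
    rewrite /gmap /= !idx_e /=.
    apply: mix_simplex; [by rewrite l0 | by exists i | by exists j].
  move=> A mA.
  change (pi' (gmap l @^-1` (@onehot_argmax R k @^-1` A)) = Q A).
  rewrite -(cp _ mA).1.
  apply: (negl_eq N) => //; first exact: gmap_pre.
    by apply: measurableX.
  move=> z /gOO [i [j ->]] /=.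
  rewrite /gmap /= !idx_e /= argmax_mix //; split => [? | []] //.
have cp2 : coupling P Rt pi.
  move=> A mA; split.
    change (pi' (Phi @^-1` (A `*` setT)) = pi' (gmap l @^-1` A)).
    congr (pi' _); apply/seteqP; split => -[x y] /=; first by case.
    by move=> H; split.
  change (pi' (Phi @^-1` (setT `*` A)) = Rt A).
  have -> : Phi @^-1` (setT `*` A) = setT `*` A.
    by apply/seteqP; split => -[x y].
  by rewrite (cp _ mA).2.
apply: (@le_trans _ _ (W_inf P Rt)).
  by apply: ereal_inf_lbound; exists P.
apply: (@le_trans _ _ (\int[pi]_z (`|z.1 - z.2| : R)%:E))%E.
  by rewrite /W_inf; apply: ereal_inf_lbound; exists pi.
rewrite /pi ge0_integral_pushforward //; last first.
  by apply/measurable_EFinP; exact: h_meas.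
rewrite preimage_setT -ge0_integralZl_EFin //; last first.
  by apply/measurable_EFinP; exact: h_meas.
apply: ae_ge0_le_integral => //.
- by move=> z _; rewrite lee_fin.
- by apply/measurable_EFinP; exact: (measurableT_comp (h_meas R k) mPhi).
- by move=> z _; apply: mule_ge0; rewrite lee_fin //.
- by apply: measurable_funeM; apply/measurable_EFinP; exact: h_meas.
apply: negligibleS N => z nP nN; apply: nP => _.
have [i [j ->]] := gOO z (fun H => H nN).
rewrite /= -EFinM lee_fin /gmap /= !idx_e /= mix_dist //.
Qed.

Theorem mainTheorem5 (R : realType) (k : nat) (Q Rt : probability (vecR R k) R) :
  Q (@onehots R k) = 1%E -> Rt (@onehots R k) = 1%E ->
  ereal_inf [set W_inf P Rt | P in Pc Q] = ((2^-1)%:E * W_inf Q Rt)%E.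
Proof.
move=> QO RtO.
apply/eqP; rewrite eq_le; apply/andP; split.
- rewrite /W_inf -ereal_inf_pZl; last by rewrite invr_gt0.
  apply: le_ereal_inf_tmp => _ [_ [pi' cp' <-] <-].
  have c0 : (0 <= \int[pi']_z (`|z.1 - z.2| : R)%:E)%E.
    by apply: integral_ge0 => z _; rewrite lee_fin.
  have UB := upper_bound R k Q Rt pi' _ QO RtO cp'.
  move: c0 UB; case Ec : (\int[pi']_z (`|z.1 - z.2| : R)%:E)%E => [x| |] // c0 UB.
    apply/lee_addgt0Pr => e e0.
    have x0 : 0 <= x by rewrite lee_fin in c0.
    set q := e / (x + 1).
    have q0 : 0 < q by rewrite /q divr_gt0 // ltr_wpDl.
    have hq : q * (x + 1) = e by rewrite /q divfK // gt_eqF // ltr_wpDl.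
    set t := Num.min (4^-1) q.
    have t0 : 0 < t by rewrite /t lt_min q0 invr_gt0 ltr0n.
    have t1 : t <= 4^-1 by rewrite /t ge_min lexx.
    have t2 : t <= q by rewrite /t ge_min lexx orbT.
    have H : (2^-1 < 2^-1 + t) && (2^-1 + t <= 1) by apply/andP; split; lra.
    case/andP: H => H1 H2; apply: (le_trans (UB _ H1 H2)).
    rewrite -!EFinM -EFinD lee_fin.
    nra.
  by rewrite muleC gt0_mulye ?lte_fin ?invr_gt0 // leey.
- apply: le_ereal_inf_tmp => _ [P PPc <-].
  rewrite [X in (_ <= X)%E]/W_inf; apply: le_ereal_inf_tmp => _ [pi cp <-].
  exact: (lower_bound R k Q Rt P pi RtO PPc cp).
Qed.
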